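(* Let $n\ge1$ and let $S=(s_I)_{I\subseteq[n]}\in(\mathbb{R}_{>0})^{2^n}$ with $s_\emptyset=1$ be a molecule given in $s$-coordinates. Identify $S$ with the tensor in $(\mathbb{R}^2)^{\otimes n}$ whose entry at $\varepsilon\in\{0,1\}^n$ is $s_{\{i:\varepsilon_i=1\}}$, and suppose this tensor has positive rank $k$. Then there exist weights $\lambda_1,\dots,\lambda_k>0$ with $\sum_j\lambda_j=1$ and molecules $S^{(1)},\dots,S^{(k)}$ with $n$ independent sites such that $S=\sum_{j=1}^k\lambda_j S^{(j)}$ (entrywise); in particular the binding polynomial of $S$ equals $\sum_{j=1}^k\lambda_j$ times the binding polynomial of $S^{(j)}$, i.e. the corresponding mixture of the $k$ molecules has the same binding curve as $S$. Moreover, $S$ cannot be written in this way using only $k-1$ molecules with $n$ independent sites.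
   Context: A molecule with $n$ sites is $W=(w_I)_{I\subseteq[n]}\in(\mathbb{R}_{>0})^{2^n}$ with $w_\emptyset=1$; its $s$-coordinates are $s_I=\prod_{I'\subseteq I}w_{I'}$ (a bijection of $(\mathbb{R}_{>0})^{2^n}$ onto itself, with $s_\emptyset=1$). The binding polynomial is $\sum_{k=0}^n a_k\Lambda^k$ with $a_k=\sum_{|I|=k}s_I$. A molecule has $n$ independent sites if $w_I=1$ for all $|I|>1$, equivalently $s_I=\prod_{i\in I}s_i$ for all $I$. A (positive) rank-one tensor is $v_1\otimes\dots\otimes v_n$ with $v_i=(s_i,t_i)\in(\mathbb{R}_{>0})^2$, whose entry at $\varepsilon\in\{0,1\}^n$ is $\prod_{i:\varepsilon_i=1}s_i\prod_{i:\varepsilon_i=0}t_i$; the positive rank of a tensor is the least number of such positive rank-one tensors summing to it. *)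

(* Defs.v *)
From HB Require Import structures.
From mathcomp Require Import all_boot all_order all_algebra.
Set Implicit Arguments. Unset Strict Implicit. Unset Printing Implicit Defensive.
Import Order.TTheory GRing.Theory Num.Theory.
Local Open Scope ring_scope.

Definition molecule_s (R : realFieldType) (n : nat) (S : {set 'I_n} -> R) : Prop :=
  (forall I, 0 < S I) /\ S set0 = 1.

Definition independent_sites (R : realFieldType) (n : nat) (S : {set 'I_n} -> R) : Prop :=
  molecule_s S /\ forall I : {set 'I_n}, S I = \prod_(i in I) S [set i].

Definition binding_poly (R : realFieldType) (n : nat) (S : {set 'I_n} -> R) : {poly R} :=
  \sum_(k < n.+1) (\sum_(I : {set 'I_n} | #|I| == k) S I) *: 'X^k.

(* Tensors in (R^2)^{\otimes n}, indexed by eps in {0,1}^n. *)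
Definition tensor (R : realFieldType) (n : nat) := {ffun 'I_n -> bool} -> R.

Definition tensor_of_s (R : realFieldType) (n : nat) (S : {set 'I_n} -> R) : tensor R n :=
  fun eps => S [set i | eps i].

(* Positive rank-one tensor v_1 (x) ... (x) v_n with v_i = (s_i, t_i) > 0. *)
Definition pos_rank_one (R : realFieldType) (n : nat) (T : tensor R n) : Prop :=
  exists (s t : 'I_n -> R), (forall i, 0 < s i /\ 0 < t i) /\
    forall eps : {ffun 'I_n -> bool},
      T eps = (\prod_(i | eps i) s i) * (\prod_(i | ~~ eps i) t i).

Definition pos_rank_decomp (R : realFieldType) (n : nat) (T : tensor R n) (m : nat) : Prop :=
  exists F : 'I_m -> tensor R n, (forall j, pos_rank_one (F j)) /\
    forall eps, T eps = \sum_(j < m) F j eps.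

Definition has_pos_rank (R : realFieldType) (n : nat) (T : tensor R n) (k : nat) : Prop :=
  pos_rank_decomp T k /\ forall m, pos_rank_decomp T m -> (k <= m)%N.

Definition mixture_of_independent (R : realFieldType) (n : nat) (S : {set 'I_n} -> R)
    (m : nat) (lam : 'I_m -> R) (Sj : 'I_m -> {set 'I_n} -> R) : Prop :=
  (forall j, 0 < lam j) /\ \sum_(j < m) lam j = 1 /\
  (forall j, independent_sites (Sj j)) /\
  forall I, S I = \sum_(j < m) lam j * Sj j I.

(* Main.v *)
Require Import Defs.
From HB Require Import structures.
From mathcomp Require Import all_boot all_order all_algebra.
Import Order.TTheory GRing.Theory Num.Theory.
Local Open Scope ring_scope.

Lemma rank_one_scaled (R : realFieldType) (n : nat) (c : R) (a : 'I_n -> R) :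
  (1 <= n)%N -> 0 < c -> (forall i, 0 < a i) ->
  pos_rank_one (fun eps : {ffun 'I_n -> bool} => c * \prod_(i | eps i) a i).
Proof.
move=> n1 c0 a0.
pose i0 : 'I_n := Ordinal n1; clearbody i0.
exists (fun i => c ^+ (i == i0) * a i), (fun i => c ^+ (i == i0)).
split.
  by move=> i; split; [apply: mulr_gt0 | ]; rewrite ?exprn_gt0.
move=> eps.
rewrite big_split /= mulrAC -(bigID (fun i => eps i) predT (fun i => c ^+ (i == i0))) /=.
have -> : \prod_(i < n) c ^+ (i == i0) = c.
  rewrite (bigD1 i0) //= eqxx expr1 big1 ?mulr1 // => i /negbTE ->.
  by rewrite expr0.
by [].
Qed.

Lemma set_ffun (n : nat) (I : {set 'I_n}) :
  [set i | [ffun i => i \in I] i] = I.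
Proof. by apply/setP => i; rewrite inE ffunE. Qed.

Theorem mainTheorem2 (R : realFieldType) (n : nat) (S : {set 'I_n} -> R) (k : nat) :
  (1 <= n)%N ->
  molecule_s S ->
  has_pos_rank (tensor_of_s S) k ->
  (exists (lam : 'I_k -> R) (Sj : 'I_k -> {set 'I_n} -> R),
      mixture_of_independent S lam Sj /\
      binding_poly S = \sum_(j < k) lam j *: binding_poly (Sj j)) /\
  ~ (exists (lam : 'I_(k - 1) -> R) (Sj : 'I_(k - 1) -> {set 'I_n} -> R),
      mixture_of_independent S lam Sj).
Proof.
move=> n1 [Spos S0] [[F [Fr FT]] Fmin].
pose z : {ffun 'I_n -> bool} := [ffun i => false].
pose e (I : {set 'I_n}) : {ffun 'I_n -> bool} := [ffun i => i \in I].
have k0 : (0 < k)%N.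
  case: (k) F FT Fr => // F FT _; have := FT z; rewrite big_ord0 /tensor_of_s.
  have -> : [set i | z i] = set0 by apply/setP => i; rewrite !inE /z ffunE.
  by rewrite S0 => /eqP; rewrite oner_eq0.
have Fprod : forall j I, F j (e I) / F j z = \prod_(i in I) (F j (e [set i]) / F j z).
  move=> j I; have [s [t [st Fst]]] := Fr j.
  have key : forall J, F j (e J) / F j z = \prod_(i in J) (s i / t i).
    move=> J; rewrite !Fst.
    have -> : \prod_(i | z i) s i = 1 by apply: big1 => i; rewrite /z ffunE.
    have -> : \prod_(i | ~~ z i) t i = \prod_i t i by apply: eq_bigl => i; rewrite /z ffunE.
    rewrite mul1r.
    have -> : \prod_(i | e J i) s i = \prod_(i in J) s i by apply: eq_bigl => i; rewrite /e ffunE.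
    have -> : \prod_(i | ~~ e J i) t i = \prod_(i | i \notin J) t i by apply: eq_bigl => i; rewrite /e ffunE.
    rewrite [X in _ / X](bigID (fun i => i \in J)) /= invfM mulrACA divff ?mulr1; last first.
      by apply/lt0r_neq0/prodr_gt0 => i _; case: (st i).
    by rewrite prodf_div.
  rewrite key; apply: eq_bigr => i _; by rewrite key big_set1.
have Fz : forall j, 0 < F j z.
  move=> j; have [s [t [st Fst]]] := Fr j; rewrite Fst.
  by apply: mulr_gt0; apply/prodr_gt0 => i _; case: (st i).
have Fe : forall j I, 0 < F j (e I).
  move=> j I; have [s [t [st Fst]]] := Fr j; rewrite Fst.
  by apply: mulr_gt0; apply/prodr_gt0 => i _; case: (st i).
have SI : forall I, S I = \sum_(j < k) F j z * (F j (e I) / F j z).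
  move=> I; rewrite -{1}(@set_ffun n I) -/(e I).
  have -> : S [set i | e I i] = tensor_of_s S (e I) by [].
  rewrite FT; apply: eq_bigr => j _.
  by rewrite mulrC divfK // gt_eqF.
have mix : mixture_of_independent S (fun j => F j z) (fun j I => F j (e I) / F j z).
  split; first exact: Fz.
  split.
    rewrite -FT /tensor_of_s -S0; congr S; apply/setP => i; by rewrite !inE ffunE.
  split; last exact: SI.
  move=> j; split; last by move=> I; rewrite Fprod.
  split; first by move=> I; apply: divr_gt0.
  have -> : e set0 = z by apply/ffunP => i; rewrite !ffunE inE.
  by rewrite divff // gt_eqF.
split.
  exists (fun j => F j z), (fun j I => F j (e I) / F j z); split => //.
  rewrite /binding_poly.
  under eq_bigr => m _ do rewrite (eq_bigr _ (fun I _ => SI I)) exchange_big scaler_suml.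
  rewrite exchange_big /=; apply: eq_bigr => j _.
  rewrite scaler_sumr; apply: eq_bigr => m _.
  by rewrite scalerA mulr_sumr.
case=> lam [Sj [lam0 [lam1 [ind SS]]]].
have : (k <= k - 1)%N.
  apply: Fmin.
  exists (fun j eps => lam j * \prod_(i | eps i) Sj j [set i]); split.
    move=> j; apply: rank_one_scaled => // i.
    by case: (ind j) => [[]].
  move=> eps; rewrite /tensor_of_s SS; apply: eq_bigr => j _.
  case: (ind j) => _ ->; congr (_ * _); apply: eq_bigl => i; by rewrite inE.
move: k0; case: (k) => // m _; by rewrite subn1 /= ltnn.
Qed.
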